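(* Let $f:\{0,1\}^n\to\{0,1\}$ be a non-constant total symmetric Boolean function and let $t_f$ be as defined in the context. Then \[ \lambda(f) \ge \sqrt{t_f\,(n+1-t_f)}, \] and consequently $\lambda(f) = \Omega(\sqrt{t_f\cdot n})$.
   Context: A Boolean function $f:\{0,1\}^n\to\{0,1\}$ is symmetric if $f(x)$ depends only on the Hamming weight $|x|$ (number of ones). For such $f$, $t_f$ is the minimum nonnegative integer $t$ such that $f$ is constant on all inputs $x$ with $t\le |x|\le n-t$ (the condition being vacuous if this range is empty). The sensitivity graph of $f$ has vertex set $\{0,1\}^n$, with $x,y$ adjacent iff they differ in exactly one coordinate and $f(x)\neq f(y)$; $A_f$ is its adjacency matrix, and the spectral sensitivity is $\lambda(f)=\|A_f\|$, the spectral norm of $A_f$. *)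

(* Defs.v *)
From HB Require Import structures.
From mathcomp Require Import all_boot all_order all_algebra.
From mathcomp Require Import boolp classical_sets reals.
Set Implicit Arguments. Unset Strict Implicit. Unset Printing Implicit Defensive.
Import Order.TTheory GRing.Theory Num.Theory.
Local Open Scope ring_scope.

Definition cube (n : nat) := {ffun 'I_n -> bool}.

Definition hw (n : nat) (x : cube n) : nat := #|[set i | x i]|.

Definition hdist (n : nat) (x y : cube n) : nat := #|[set i | x i != y i]|.

Definition symmetric_fun (n : nat) (f : cube n -> bool) : Prop :=
  forall x y : cube n, hw x = hw y -> f x = f y.

Definition constant_fun (n : nat) (f : cube n -> bool) : Prop :=
  forall x y : cube n, f x = f y.

Definition const_on_middle (n : nat) (f : cube n -> bool) (t : nat) : bool :=
  [forall x : cube n, forall y : cube n,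
    ((t <= hw x <= n - t) && (t <= hw y <= n - t))%N ==> (f x == f y)].

Lemma const_on_middle_ex (n : nat) (f : cube n -> bool) :
  exists t, const_on_middle f t.
Proof.
exists n.+1; apply/forallP => x; apply/forallP => y; apply/implyP.
move=> /andP[/andP[h1 h2] _].
have h3 : (n - n.+1 = 0)%N by apply/eqP; rewrite subn_eq0.
by move: h2; rewrite h3 leqn0 => /eqP h4; rewrite h4 in h1.
Qed.

Definition t_f (n : nat) (f : cube n -> bool) : nat :=
  ex_minn (const_on_middle_ex f).

Definition sens_adj (R : pzRingType) (n : nat) (f : cube n -> bool)
    (x y : cube n) : R :=
  if (hdist x y == 1)%N && (f x != f y) then 1 else 0.

Definition spectral_norm (R : realType) (T : finType) (A : T -> T -> R) : R :=
  sup [set r : R | exists v : T -> R,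
         \sum_(y : T) v y ^+ 2 = 1 /\
         r = Num.sqrt (\sum_(x : T) (\sum_(y : T) A x y * v y) ^+ 2)].

Definition spec_sens (R : realType) (n : nat) (f : cube n -> bool) : R :=
  spectral_norm (@sens_adj R n f).

(* Main.v *)
Require Import Defs.
From HB Require Import structures.
From mathcomp Require Import all_boot all_order all_algebra.
From mathcomp Require Import boolp classical_sets reals.
From mathcomp Require Import lra zify.
Import Order.TTheory GRing.Theory Num.Theory.
Set Implicit Arguments. Unset Strict Implicit.
Local Open Scope ring_scope.

Local Open Scope classical_set_scope.
Lemma spec_lb (R : realType) (T : finType) (A : T -> T -> R) (v : T -> R) (c : R) :
  0 <= c -> 0 < \sum_y v y ^+ 2 ->
  c ^+ 2 * \sum_y v y ^+ 2 <= \sum_x (\sum_y A x y * v y) ^+ 2 ->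
  c <= spectral_norm A.
Proof.
move=> c0 S0 hc.
set S := \sum_y v y ^+ 2 in S0 hc.
have sS0 : 0 < Num.sqrt S by rewrite sqrtr_gt0.
pose u y := v y / Num.sqrt S.
have hu : \sum_y u y ^+ 2 = 1.
  rewrite /u; under eq_bigr do rewrite expr_div_n.
  by rewrite -mulr_suml sqr_sqrtr ?ltW // divff // gt_eqF.
have hAu : \sum_x (\sum_y A x y * u y) ^+ 2 = (\sum_x (\sum_y A x y * v y) ^+ 2) / S.
  rewrite mulr_suml; apply: eq_bigr => x _.
  rewrite /u; under eq_bigr do rewrite mulrA.
  by rewrite -mulr_suml expr_div_n sqr_sqrtr // ltW.
apply: (@le_trans _ _ (Num.sqrt (\sum_x (\sum_y A x y * u y) ^+ 2))).
  rewrite -(@ger0_norm _ c) // -sqrtr_sqr ler_sqrt; last first.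
    by apply: sumr_ge0 => x _; rewrite sqr_ge0.
  by rewrite hAu ler_pdivlMr // normrX ger0_norm.
apply: ub_le_sup; last by exists u.
pose K := \sum_x (\sum_y `|A x y|) ^+ 2.
exists (Num.sqrt K) => r [w [hw ->]].
rewrite ler_sqrt; last by apply: sumr_ge0 => x _; rewrite sqr_ge0.
apply: ler_sum => x _.
have wb : forall y, `|w y| <= 1.
  move=> y; have : w y ^+ 2 <= 1.
    by rewrite -hw (bigD1 y) //= lerDl sumr_ge0 // => z _; rewrite sqr_ge0.
  rewrite -(real_normK (num_real _)) => h.
  have := normr_ge0 (w y); nra.
rewrite -(real_normK (num_real _)).
have hs : `|\sum_y A x y * w y| <= \sum_y `|A x y|.
  apply: (le_trans (ler_norm_sum _ _ _)); apply: ler_sum => y _.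
  by rewrite normrM ler_piMr.
rewrite !expr2; apply: ler_pM => //.
Qed.
Local Close Scope classical_set_scope.


Definition flip n (x : cube n) (i : 'I_n) : cube n :=
  [ffun j => if j == i then ~~ x j else x j].

Lemma hw_flip n (x : cube n) i :
  hw (flip x i) = if x i then (hw x).-1 else (hw x).+1.
Proof.
rewrite /hw.
case: ifP => xi.
  have -> : [set j | flip x i j] = [set j | x j] :\ i.
    by apply/setP => j; rewrite !inE ffunE; case: eqP => [->|]; rewrite ?xi ?andbT.
  by rewrite (cardsD1 i [set j | x j]) inE xi.
have -> : [set j | flip x i j] = i |: [set j | x j].
  by apply/setP => j; rewrite !inE ffunE; case: eqP => [->|] //=; rewrite xi.
by rewrite cardsU1 inE xi.
Qed.

Lemma flip_inj n (x : cube n) : injective (flip x).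
Proof.
move=> i j e; apply/eqP; apply/negPn/negP => ne.
have := congr1 (fun g : cube n => g i) e; rewrite !ffunE eqxx (negbTE ne).
by case: (x i).
Qed.

Lemma hdist1 n (x y : cube n) : (hdist x y == 1)%N = (y \in [set flip x i | i : 'I_n]).
Proof.
apply/idP/idP.
  move=> /cards1P [i hi]; apply/imsetP; exists i => //.
  apply/ffunP => j; rewrite ffunE.
  have := congr1 (fun A : {set 'I_n} => j \in A) hi; rewrite !inE.
  case: (eqVneq j i) => [->|ne] /=.
    by case: (x i); case: (y i).
  by move=> /negbT; rewrite negbK => /eqP.
move=> /imsetP [i _ ->]; apply/cards1P; exists i; apply/setP => j.
rewrite !inE ffunE; case: (j == i); [by case: (x j) | by rewrite eqxx].
Qed.

Lemma nbr_sum (R : realType) n (x : cube n) (h : cube n -> R) :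
  \sum_y (if (hdist x y == 1)%N then h y else 0) = \sum_i h (flip x i).
Proof.
rewrite -big_mkcond /=.
under eq_bigl do rewrite hdist1.
rewrite big_imset //=; move=> i j _ _; exact: flip_inj.
Qed.

Lemma card_notx n (x : cube n) : #|[set i | ~~ x i]| = (n - hw x)%N.
Proof.
rewrite /hw; have h := cardsC [set i | x i]; rewrite card_ord in h.
suff : (#|[set i | x i]| + #|[set i | ~~ x i]| = n)%N by lia.
rewrite -[X in _ = X]h; congr (_ + _)%N; apply: eq_card => i; by rewrite !inE.
Qed.

Lemma wit n k : (k <= n)%N -> exists x : cube n, hw x = k.
Proof.
elim: k => [|k IH] hk.
  exists [ffun=> false]; rewrite /hw.
  rewrite (_ : [set i | _] = finset.set0) ?cards0 //; apply/setP => i.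
  by rewrite !inE ffunE.
have [x hx] := IH (ltnW hk).
have : exists i, ~~ x i.
  case: (boolP [exists i, ~~ x i]) => [/existsP //|]; rewrite negb_exists => /forallP all.
  have : hw x = n.
    rewrite /hw -[in RHS](card_ord n) -cardsT; apply: eq_card => i.
    by rewrite !inE; have := all i; rewrite negbK.
  lia.
move=> [i xi]; exists (flip x i); rewrite hw_flip (negbTE xi) hx //.
Qed.

Lemma hw_pos n (x : cube n) i : x i -> (0 < hw x)%N.
Proof. by move=> xi; rewrite /hw (cardsD1 i) inE xi. Qed.

Lemma layer_bound (R : realType) n (f : cube n -> bool) s :
  (1 <= s <= n)%N ->
  (forall x y : cube n, hw x = s.-1 -> hw y = s -> f x != f y) ->
  Num.sqrt ((n - s.-1)%:R * s%:R) <= spec_sens R f.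
Proof.
move=> /andP[s1 sn] hd.
set d1 : R := (n - s.-1)%:R; set d2 : R := s%:R.
have d10 : 0 <= d1 by rewrite ler0n.
have d20 : 0 <= d2 by rewrite ler0n.
pose v (y : cube n) : R :=
  if hw y == s.-1 then Num.sqrt d1 else if hw y == s then Num.sqrt d2 else 0.
have Av : forall x, \sum_y sens_adj R f x y * v y =
    \sum_i (if f x != f (flip x i) then v (flip x i) else 0).
  move=> x; rewrite -(nbr_sum x (fun y => if f x != f y then v y else 0)); apply: eq_bigr => y _.
  rewrite /sens_adj; case: (hdist x y == 1)%N => /=; last by rewrite mul0r.
  by case: (f x != f y); rewrite ?mul1r ?mul0r.
apply: (@spec_lb R _ _ v); first exact: sqrtr_ge0.
  have [w hw] := wit sn.
  rewrite (bigD1 w) //= {1}/v hw (_ : (s == s.-1) = false); last by lia.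
  rewrite eqxx sqr_sqrtr // ltr_wpDr //; first by apply: sumr_ge0 => y _; rewrite sqr_ge0.
  by rewrite /d2 ltr0n.
rewrite sqr_sqrtr ?mulr_ge0 // mulr_sumr; apply: ler_sum => x _.
rewrite Av.
case: (eqVneq (hw x) s.-1) => hx.
  have -> : \sum_i (if f x != f (flip x i) then v (flip x i) else 0)
      = \sum_(i | ~~ x i) Num.sqrt d2.
    rewrite [RHS]big_mkcond /=; apply: eq_bigr => i _.
    case xi: (x i) => /=.
      have hf : hw (flip x i) = s.-2 by rewrite hw_flip xi hx.
      have := hw_pos xi; rewrite hx => hp.
      rewrite /v hf (_ : (s.-2 == s.-1) = false); last by lia.
      by rewrite (_ : (s.-2 == s) = false); [case: ifP|lia].
    have hf : hw (flip x i) = s by rewrite hw_flip xi hx; lia.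
    rewrite hd // /v hf (_ : (s == s.-1) = false) ?eqxx //; lia.
  rewrite sumr_const /v hx eqxx.
  have -> : #|[pred i | ~~ x i]| = (n - s.-1)%N by rewrite -hx -card_notx; apply: eq_card => i; rewrite !inE.
  rewrite -mulr_natl -/d1 exprMn !sqr_sqrtr //; lra.
case: (eqVneq (hw x) s) => hx2.
  have -> : \sum_i (if f x != f (flip x i) then v (flip x i) else 0)
      = \sum_(i | x i) Num.sqrt d1.
    rewrite [RHS]big_mkcond /=; apply: eq_bigr => i _.
    case xi: (x i) => /=.
      have hf : hw (flip x i) = s.-1 by rewrite hw_flip xi hx2.
      by rewrite eq_sym hd // /v hf eqxx.
    have hf : hw (flip x i) = s.+1 by rewrite hw_flip xi hx2.
    rewrite /v hf (_ : (s.+1 == s.-1) = false); last by lia.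
    by rewrite (_ : (s.+1 == s) = false); [case: ifP|lia].
  rewrite sumr_const /v (negbTE hx) hx2 eqxx.
  have -> : #|[pred i | x i]| = s by rewrite -hx2; apply: eq_card => i; rewrite !inE.
  rewrite -mulr_natl -/d2 exprMn !sqr_sqrtr //; lra.
by rewrite /v (negbTE hx) (negbTE hx2) expr0n /= mulr0 sqr_ge0.
Qed.

Lemma hw_le n (x : cube n) : (hw x <= n)%N.
Proof. by rewrite /hw -[X in (_ <= X)%N](card_ord n) max_card. Qed.

Lemma ivt n (f : cube n -> bool) : symmetric_fun f ->
  forall a b, (a <= b <= n)%N -> forall z z' : cube n, hw z = a -> hw z' = b -> f z != f z' ->
  exists s, [/\ (a < s)%N, (s <= b)%N &
    forall u u' : cube n, hw u = s.-1 -> hw u' = s -> f u != f u'].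
Proof.
move=> hs a; elim=> [|b IH] /andP[ab bn] z z' hz hz' hne.
  have a0 : a = 0%N by lia.
  by move: hne; rewrite (hs z z') ?eqxx // hz hz' a0.
case: (eqVneq a b.+1) => [eab|nab].
  by move: hne; rewrite (hs z z') ?eqxx // hz hz' eab.
have [w hw] := wit (ltnW bn).
case: (eqVneq (f z) (f w)) => e.
  exists b.+1; split; [lia|lia|]; move=> u u' hu hu'.
  by rewrite (hs u w) ?hw ?hu // (hs u' z') ?hu' ?hz' // -e.
have [s [h1 h2 h3]] := IH (ltac:(lia)) z w hz hw e.
by exists s; split => //; lia.
Qed.

Lemma main1 (R : realType) n (f : cube n -> bool) :
  symmetric_fun f -> ~ constant_fun f ->
  Num.sqrt ((t_f f)%:R * (n%:R + 1 - (t_f f)%:R)) <= spec_sens R f.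
Proof.
move=> hs hnc.
rewrite /t_f; case: ex_minnP => t ht hmin.
have t1 : (1 <= t)%N.
  case: t ht hmin => // ht _; exfalso; apply: hnc => x y.
  apply/eqP; move/forallP: ht => /(_ x) /forallP /(_ y) /implyP; apply.
  by rewrite !subn0 !hw_le.
have : ~~ const_on_middle f t.-1.
  by apply/negP => /hmin; lia.
rewrite negb_forall => /existsP [x]; rewrite negb_forall => /existsP [y].
rewrite negb_imply => /andP [/andP [/andP[hx1 hx2] /andP[hy1 hy2]] hne].
wlog lxy : x y hx1 hx2 hy1 hy2 hne / (hw x < hw y)%N.
  move=> W; case: (ltngtP (hw x) (hw y)) => c.
  - exact: (W x y).
  - by apply: (W y x) => //; rewrite eq_sym.
  - by move: hne; rewrite (hs x y) ?eqxx.
have [s [hs1 hs2 hs3]] := ivt hs (ltac:(have := hw_le y; lia) : (hw x <= hw y <= n)%N)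
  (erefl _) (erefl _) hne.
have sn : (s <= n)%N by have := hw_le y; lia.
have hst : s = t \/ s = (n - t).+1.
  case: (leqP t s.-1) => a; last by left; lia.
  case: (leqP s (n - t)) => b; last by right; lia.
  exfalso.
  have [u hu] := wit (leq_trans (leq_pred s) sn).
  have [u' hu'] := wit sn.
  have hne2 := hs3 u u' hu hu'.
  move/forallP: ht => /(_ u) /forallP /(_ u') /implyP H.
  have e : f u == f u'.
    by apply: H; rewrite hu hu'; apply/andP; split; apply/andP; split; lia.
  by rewrite e in hne2.
have := layer_bound R (ltac:(apply/andP; split; lia) : (1 <= s <= n)%N) hs3.
have eab : ((n - s.-1) + s = n.+1)%N by lia.
have hr := congr1 (fun k => k%:R : R) eab; rewrite /= natrD -addn1 natrD in hr.
suff -> : (t%:R * (n%:R + 1 - t%:R) : R) = (n - s.-1)%:R * s%:R by [].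
case: hst => e.
  rewrite -e; have -> : ((n - s.-1)%:R : R) = n%:R + 1 - s%:R by lra.
  by rewrite mulrC.
have et : t = (n - s.-1)%N by lia.
rewrite [in LHS]et; have -> : (s%:R : R) = n%:R + 1 - (n - s.-1)%:R by lra.
by [].
Qed.

Lemma t_f_le n (f : cube n -> bool) : symmetric_fun f -> (2 * t_f f <= n.+1)%N.
Proof.
move=> hs; rewrite /t_f; case: ex_minnP => t _ hmin.
have : (t <= n.+1 %/ 2)%N.
  apply: hmin; apply/forallP => x; apply/forallP => y; apply/implyP => /andP[h1 h2].
  by rewrite (hs x y) //; lia.
lia.
Qed.

Unset Implicit Arguments.
Local Open Scope ring_scope.
Theorem mainTheorem3 (R : realType) :
  (forall (n : nat) (f : cube n -> bool),
     symmetric_fun f -> ~ constant_fun f ->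
     Num.sqrt ((t_f f)%:R * (n%:R + 1 - (t_f f)%:R)) <= spec_sens R f)
  /\
  (exists c : R, 0 < c /\
     forall (n : nat) (f : cube n -> bool),
       symmetric_fun f -> ~ constant_fun f ->
       c * Num.sqrt ((t_f f * n)%:R) <= spec_sens R f).
Proof.
split; first by move=> n f; exact: main1.
exists (2^-1); split; first by rewrite invr_gt0.
move=> n f hs hnc; apply: le_trans (main1 R hs hnc).
have ht := t_f_le hs.
set t := t_f f in ht *.
have htr : (2 * t%:R <= n%:R + 1 :> R).
  by rewrite -(natrD _ n 1) -natrM ler_nat; lia.
have t0 : (0 <= t%:R :> R) by rewrite ler0n.
have n0 : (0 <= n%:R :> R) by rewrite ler0n.
have -> : 2^-1 * Num.sqrt (t * n)%:R = Num.sqrt ((2^-1) ^+ 2 * (t * n)%:R :> R).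
  by rewrite sqrtrM ?sqr_ge0 // sqrtr_sqr ger0_norm // invr_ge0.
rewrite ler_sqrt; last by nra.
rewrite natrM; nra.
Qed.
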